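(* Let $t \geq 1$ and $N \geq 2t+1$ be integers, and let $G$ be a graph with no isolated vertices, $e(G)=N$, $\Delta(G) = N-t > \frac{N}{2}$, and $e(L(G)) = f(N,N-t)$. Then $f(N,N-t) = \binom{N-t}{2} + \binom{t+2}{2} - 1$, and $G$ is one of the following: (1) the graph $Q(N,t)$: $G$ contains two adjacent vertices $u$ and $v$ with $\deg(u) = N-t$ and $\deg(v) = t+1$, such that all $t$ neighbours of $v$ other than $u$ are also neighbours of $u$ (so $G$ consists of the star centred at $u$ with $N-t$ leaves together with $t$ edges joining $v$ to $t$ other leaves of this star); (2) only when $t=3$, the graph $Q^*(N,3)$: the star centred at a vertex $u$ with $N-3$ leaves together with a triangle on three of these leaves.
   Context: All graphs are finite and simple; $L(G)$ is the line graph of $G$; $e(\cdot)$, $\Delta(\cdot)$, $\delta(\cdot)$ denote number of edges, maximum degree and minimum degree. For integers $N \ge \Delta \ge 1$, $f(N,\Delta) = \max\{ e(L(G)) : e(G)=N, \Delta(G)=\Delta, \delta(G)\geq 1\}$, the maximum over all simple graphs $G$. *)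

(* Defs.v *)
From mathcomp Require Import all_boot.
Set Implicit Arguments. Unset Strict Implicit. Unset Printing Implicit Defensive.

Definition simple_graph (T : finType) (g : rel T) : Prop :=
  symmetric g /\ irreflexive g.

Definition edge_set (T : finType) (g : rel T) : {set {set T}} :=
  [set [set p.1; p.2] | p in [pred p : T * T | g p.1 p.2]].

Definition nedges (T : finType) (g : rel T) : nat := #|edge_set g|.

Definition deg (T : finType) (g : rel T) (x : T) : nat := #|[set y | g x y]|.
Definition maxdeg (T : finType) (g : rel T) : nat := \max_(x : T) deg g x.

Definition line_rel (T : finType) (g : rel T) : rel {set T} :=
  fun a b => [&& a \in edge_set g, b \in edge_set g, a != b & (a :&: b != set0)].

Definition nLedges (T : finType) (g : rel T) : nat := nedges (line_rel g).

Definition admissible (N D : nat) (T : finType) (g : rel T) : Prop :=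
  simple_graph g /\ nedges g = N /\ maxdeg g = D /\ (forall x : T, 0 < deg g x).

(* is_f N D m  :<->  m = f(N,D), i.e. m is the maximum of e(L(G)) over all
   admissible finite simple graphs G. *)
Definition is_f (N D m : nat) : Prop :=
  (exists (T : finType) (g : rel T), admissible N D g /\ nLedges g = m) /\
  (forall (T : finType) (g : rel T), admissible N D g -> nLedges g <= m).

Definition is_Q (N t : nat) (T : finType) (g : rel T) : Prop :=
  exists u v : T, [/\ g u v, deg g u = N - t, deg g v = t.+1 &
    forall w, g v w -> w != u -> g u w].

Definition is_Qstar3 (N : nat) (T : finType) (g : rel T) : Prop :=
  exists u a b c : T,
    [/\ deg g u = N - 3, [/\ g u a, g u b & g u c],
        [/\ a != b, b != c & a != c], [/\ g a b, g b c & g a c] &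
        forall x y, g x y ->
          [\/ x = u, y = u | (x \in [:: a; b; c]) && (y \in [:: a; b; c])]].

(* Main.v *)
Require Import Defs.
From mathcomp Require Import all_boot zify.
Set Implicit Arguments. Unset Strict Implicit. Unset Printing Implicit Defensive.

Lemma edge_setP (T : finType) (g : rel T) (B : {set T}) :
  reflect (exists x y, g x y /\ B = [set x; y]) (B \in edge_set g).
Proof.
apply: (iffP imsetP) => [[p Hp ->]|[x [y [Hxy ->]]]].
  by exists p.1, p.2.
by exists (x, y).
Qed.

Lemma card_setb (T : finType) (P : pred T) : #|[set x | P x]| = \sum_x P x.
Proof.
rewrite -sum1dep_card big_mkcond /=; apply: eq_bigr => x _; by case: (P x).
Qed.

Lemma card_in_sum (T : finType) (A : {set T}) (P : pred T) :
  #|[set x in A | P x]| = \sum_(x in A) P x.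
Proof.
rewrite -sum1dep_card big_mkcondr /=; apply: eq_bigr => x _; by case: (P x).
Qed.

Definition star (T : finType) (g : rel T) (x : T) : {set {set T}} :=
  [set e in edge_set g | x \in e].

Lemma two_pts (T : finType) (g : rel T) (e : {set T}) (x y : T) :
  e \in edge_set g -> x \in e -> y \in e -> x != y -> e = [set x; y].
Proof.
move=> /edge_setP [p [q [_ ->]]].
rewrite !inE => /orP [] /eqP -> /orP [] /eqP -> //; rewrite ?eqxx //.
by rewrite setUC.
Qed.

Lemma deg_star (T : finType) (g : rel T) (x : T) :
  simple_graph g -> deg g x = #|star g x|.
Proof.
move=> [sym irr].
have -> : star g x = [set [set x; y] | y in [set y | g x y]].
  apply/setP => e; rewrite inE; apply/andP/imsetP.
    move=> [/edge_setP [p [q [Hpq ->]]]].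
    rewrite !inE => /orP [] /eqP ->.
      by exists q; rewrite ?inE.
    exists p; first by rewrite inE sym.
    by rewrite setUC.
  move=> [y]; rewrite inE => Hxy ->; split; last by rewrite !inE eqxx.
  by apply/edge_setP; exists x, y.
rewrite card_in_imset //.
move=> y1 y2; rewrite !inE => H1 H2 E.
have : y1 \in [set x; y2] by rewrite -E !inE eqxx orbT.
rewrite !inE => /orP [] /eqP // Ey.
by move: H1; rewrite Ey irr.
Qed.

Lemma edge_card2 (T : finType) (g : rel T) (e : {set T}) :
  irreflexive g -> e \in edge_set g -> #|e| = 2.
Proof.
move=> irr /edge_setP [p [q [Hpq ->]]]; rewrite cards2.
case: eqVneq Hpq => // ->; by rewrite irr.
Qed.

Lemma handshake (T : finType) (g : rel T) :
  simple_graph g -> \sum_x deg g x = 2 * nedges g.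
Proof.
move=> sg.
have -> : \sum_x deg g x = \sum_x \sum_(e in edge_set g) (x \in e).
  apply: eq_bigr => x _; rewrite deg_star //.
  by rewrite /star card_in_sum.
rewrite exchange_big /= /nedges -sum1_card big_distrr /=.
apply: eq_bigr => e He.
rewrite muln1 -(edge_card2 sg.2 He) -card_setb.
by apply: eq_card => y; rewrite inE.
Qed.

Definition Sx (T : finType) (g : rel T) (x : T) : {set {set {set T}}} :=
  [set P : {set {set T}} | P \subset star g x & #|P| == 2].

Lemma lineP (T : finType) (g : rel T) (P : {set {set T}}) :
  (P \in edge_set (line_rel g)) = [exists x, P \in Sx g x].
Proof.
apply/edge_setP/existsP.
  move=> [a [b [/and4P [Ha Hb Hab /set0Pn [x Hx]] ->]]].
  move: Hx; rewrite inE => /andP [xa xb].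
  exists x; rewrite inE subUset !sub1set !inE Ha Hb xa xb /= cards2 Hab.
  done.
move=> [x]; rewrite inE => /andP [sub /cards2P [a [b [ab EP]]]].
move: sub; rewrite EP subUset !sub1set !inE => /andP [/andP [Ha xa] /andP [Hb xb]].
exists a, b; split => //; apply/and4P; split => //.
by apply/set0Pn; exists x; rewrite inE xa xb.
Qed.

Lemma Sx_uniq (T : finType) (g : rel T) (P : {set {set T}}) (x y : T) :
  P \in Sx g x -> P \in Sx g y -> x = y.
Proof.
rewrite !inE => /andP [sx /cards2P [a [b [ab EP]]]] /andP [sy _].
apply/eqP; apply/negP => /negP xy.
move: sx sy; rewrite EP !subUset !sub1set !inE.
move=> /andP [/andP [Ha xa] /andP [Hb xb]] /andP [/andP [_ ya] /andP [_ yb]].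
have := two_pts Ha xa ya xy; have := two_pts Hb xb yb xy.
by move=> Eb Ea; rewrite Ea Eb eqxx in ab.
Qed.

Lemma line_count (T : finType) (g : rel T) :
  simple_graph g -> nLedges g = \sum_x 'C(deg g x, 2).
Proof.
move=> sg.
rewrite /nLedges /nedges -sum1_card.
have -> : \sum_(P in edge_set (line_rel g)) 1 =
          \sum_(P in edge_set (line_rel g)) \sum_x (P \in Sx g x).
  apply: eq_bigr => P; rewrite lineP => /existsP [x Hx].
  rewrite -card_setb (_ : [set y | P \in Sx g y] = [set x]) ?cards1 //.
  apply/setP => y; rewrite !inE; apply/idP/eqP => [Hy|->]; last first.
    by move: Hx; rewrite inE.
  by apply: (Sx_uniq _ Hx); rewrite inE.
rewrite exchange_big /=; apply: eq_bigr => x _.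
rewrite deg_star // -(cards_draws (star g x) 2) -card_in_sum.
apply: eq_card => P; rewrite !inE.
case Hx: ((P \subset star g x) && (#|P| == 2)); last by rewrite andbF.
rewrite andbT lineP; apply/existsP; exists x => //.
by rewrite inE.
Qed.

Lemma sum_option (A : finType) (F : option A -> nat) :
  \sum_(x : option A) F x = F None + \sum_(a : A) F (Some a).
Proof.
rewrite (bigD1 None) //=; congr (_ + _).
rewrite (reindex_omap Some id); last by move=> [a|].
by apply: eq_bigl => a /=; rewrite eqxx.
Qed.

Definition Tq (t s : nat) : finType := option (option ('I_t + 'I_s)).

Definition qadj (t s : nat) (x y : Tq t s) : bool :=
  match x, y with
  | None, Some _ => true
  | Some _, None => true
  | Some None, Some (Some (inl _)) => true
  | Some (Some (inl _)), Some None => true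
  | _, _ => false
  end.

Lemma qadj_simple t s : simple_graph (@qadj t s).
Proof.
split.
  by move=> [[[i|j]|]|] [[[i'|j']|]|].
by move=> [[[i|j]|]|].
Qed.

Lemma card_Tq t s : #|Tq t s| = (t+s+1).+1.
Proof. by rewrite !card_option card_sum !card_ord addn1. Qed.

Lemma deg_None t s : deg (@qadj t s) None = t + s + 1.
Proof.
rewrite /deg (_ : [set y | qadj None y] = [set~ None]).
  rewrite cardsC1 card_Tq //.
by apply/setP => [[[[i|j]|]|]]; rewrite !inE.
Qed.

Lemma deg_v t s : deg (@qadj t s) (Some None) = t + 1.
Proof.
rewrite /deg (_ : [set y | qadj (Some None) y] =
   None |: [set (Some (Some (inl i)) : Tq t s) | i : 'I_t]).
  rewrite cardsU1 card_imset; last by move=> i j [].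
  rewrite card_ord addnC.
  suff -> : None \notin [set (Some (Some (inl i)) : Tq t s) | i : 'I_t] by [].
  by apply/negP => /imsetP [i _].
apply/setP => [[[[i|j]|]|]]; rewrite !inE //=.
- by apply/esym/imsetP; exists i.
- by apply/esym/imsetP => [[i' _]].
- by apply/esym/imsetP => [[i' _]].
Qed.

Lemma deg_c t s i : deg (@qadj t s) (Some (Some (inl i))) = 2.
Proof.
rewrite /deg (_ : [set y | qadj (Some (Some (inl i))) y] = [set None; Some None]).
  by rewrite cards2.
by apply/setP => [[[[i'|j]|]|]]; rewrite !inE.
Qed.

Lemma deg_l t s j : deg (@qadj t s) (Some (Some (inr j))) = 1.
Proof.
rewrite /deg (_ : [set y | qadj (Some (Some (inr j))) y] = [set None]).
  by rewrite cards1.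
by apply/setP => [[[[i'|j']|]|]]; rewrite !inE.
Qed.

Lemma sum_Tq t s (F : Tq t s -> nat) :
  \sum_x F x = F None + F (Some None) + \sum_(i < t) F (Some (Some (inl i)))
      + \sum_(j < s) F (Some (Some (inr j))).
Proof.
rewrite sum_option sum_option big_sumType /=; lia.
Qed.

Lemma Q_admissible t s : 1 <= t ->
  admissible (t + s + 1 + t) (t + s + 1) (@qadj t s) /\
  nLedges (@qadj t s) = 'C(t + s + 1, 2) + 'C(t + 2, 2) - 1.
Proof.
move=> t1.
have sg := qadj_simple t s.
have dsum := handshake sg.
have Hc (F : nat -> nat) : \sum_(i < t) F (deg (@qadj t s) (Some (Some (inl i)))) = t * F 2.
  by rewrite (eq_bigr (fun _ => F 2)) ?sum_nat_const ?card_ord // => i _; rewrite deg_c.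
have Hl (F : nat -> nat) : \sum_(j < s) F (deg (@qadj t s) (Some (Some (inr j)))) = s * F 1.
  by rewrite (eq_bigr (fun _ => F 1)) ?sum_nat_const ?card_ord // => i _; rewrite deg_l.
rewrite sum_Tq deg_None deg_v (Hc id) (Hl id) in dsum.
split; first split; [done| split; [lia | split]|].
- apply/eqP; rewrite eqn_leq; apply/andP; split.
    apply/bigmax_leqP => [[[[i|j]|]|]] _.
    + by rewrite deg_c; lia.
    + by rewrite deg_l; lia.
    + by rewrite deg_v; lia.
    + by rewrite deg_None.
  by rewrite -{1}(deg_None t s) leq_bigmax.
- by move=> [[[i|j]|]|]; rewrite ?deg_c ?deg_l ?deg_v ?deg_None; lia.
rewrite line_count // sum_Tq deg_None deg_v (Hc (fun d => 'C(d, 2))) (Hl (fun d => 'C(d, 2))).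
rewrite (_ : 'C(t + 2, 2) = 'C(t + 1, 2) + t + 1); last first.
  rewrite addn2 !addn1 binS bin1; lia.
rewrite (_ : 'C(2,2) = 1) // (_ : 'C(1,2) = 0) //; lia.
Qed.

Definition Hrel (T : finType) (g : rel T) (u : T) : rel T :=
  [rel x y | [&& g x y, x != u & y != u]].

Lemma HrelE (T : finType) (g : rel T) u x y :
  Hrel g u x y = [&& g x y, x != u & y != u].
Proof. by []. Qed.

Lemma H_simple (T : finType) (g : rel T) u : simple_graph g -> simple_graph (Hrel g u).
Proof.
move=> [sym irr]; split.
  by move=> x y; rewrite !HrelE sym; case: (x != u); case: (y != u); rewrite ?andbT ?andbF.
by move=> x; rewrite HrelE irr.
Qed.

Lemma deg_decomp (T : finType) (g : rel T) u x : simple_graph g ->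
  deg g x = deg (Hrel g u) x + g u x + (x == u) * deg g u.
Proof.
move=> [sym irr].
case: (eqVneq x u) => [->|xu].
  rewrite irr mul1n addn0 /deg (_ : [set y | Hrel g u u y] = set0) ?cards0 //.
  by apply/setP => y; rewrite !inE HrelE eqxx andbF.
rewrite mul0n addn0 /deg (cardsD1 u) addnC inE sym; congr (_ + _).
by apply: eq_card => y; rewrite !inE HrelE xu andbC.
Qed.

Lemma bin_decomp (T : finType) (g : rel T) u x : simple_graph g ->
  'C(deg g x, 2) = 'C(deg (Hrel g u) x, 2) + g u x * deg (Hrel g u) x
                   + (x == u) * 'C(deg g u, 2).
Proof.
move=> sg; rewrite (deg_decomp u x sg).
case: (eqVneq x u) => [->|xu].
  rewrite sg.2 (_ : deg (Hrel g u) u = 0) ?mul1n //.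
  rewrite /deg (_ : [set y | Hrel g u u y] = set0) ?cards0 //.
  by apply/setP => y; rewrite !inE HrelE eqxx andbF.
rewrite !mul0n !addn0; case: (g u x) => /=.
  by rewrite mul1n addn1 binS bin1.
by rewrite mul0n !addn0.
Qed.

Lemma sum_pick (T : finType) (u : T) (c : nat) : \sum_x ((x == u) * c) = c.
Proof.
rewrite (bigD1 u) //= eqxx mul1n big1 ?addn0 // => x /negbTE ->.
by rewrite mul0n.
Qed.

Definition D2 (T : finType) (h : rel T) : {set {set {set T}}} :=
  [set B : {set {set T}} | B \subset edge_set h & #|B| == 2].

Lemma line_sub (T : finType) (h : rel T) : edge_set (line_rel h) \subset D2 h.
Proof.
apply/subsetP => B /edge_setP [a [b [/and4P [Ha Hb ab _] ->]]].
by rewrite inE subUset !sub1set Ha Hb cards2 ab.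
Qed.

Lemma line_le (T : finType) (h : rel T) : nLedges h <= 'C(nedges h, 2).
Proof.
rewrite /nLedges /nedges -cards_draws; exact: subset_leq_card (line_sub h).
Qed.

Lemma line_eq (T : finType) (h : rel T) : nLedges h = 'C(nedges h, 2) ->
  forall x y z w, h x y -> h z w -> [|| x == z, x == w, y == z | y == w].
Proof.
move=> E x y z w hxy hzw.
have EL : edge_set (line_rel h) = D2 h.
  apply/eqP; rewrite eqEcard line_sub /=.
  move: E; rewrite /nLedges /nedges -cards_draws => ->; exact: leqnn.
have He1 : [set x; y] \in edge_set h by apply/edge_setP; exists x, y.
have He2 : [set z; w] \in edge_set h by apply/edge_setP; exists z, w.
case: (eqVneq [set x; y] [set z; w]) => [E12|n12].
  have : x \in [set z; w] by rewrite -E12 !inE eqxx.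
  by rewrite !inE => /orP [] ->; rewrite ?orbT.
have : [set [set x; y]; [set z; w]] \in edge_set (line_rel h).
  by rewrite EL inE subUset !sub1set He1 He2 cards2 n12.
move=> /edge_setP [p [q [/and4P [_ _ pq /set0Pn [v vpq]] EE]]].
have Hp : p \in [set [set x; y]; [set z; w]] by rewrite EE !inE eqxx.
have Hq : q \in [set [set x; y]; [set z; w]] by rewrite EE !inE eqxx orbT.
have Hv : v \in [set x; y] :&: [set z; w].
  move: Hp Hq pq; rewrite !inE => /orP [] /eqP Ep /orP [] /eqP Eq;
    rewrite Ep Eq in vpq *; rewrite ?eqxx //= => _.
  1,2: by move: vpq; rewrite !inE => /andP [] -> ->.
move: Hv; rewrite !inE => /andP [] /orP [] /eqP -> /orP [] /eqP ->;
  by rewrite eqxx ?orbT.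
Qed.

Lemma centre_Q (T : finType) (g : rel T) u N t v w :
  simple_graph g -> deg g u = N - t -> nedges (Hrel g u) = t ->
  (forall x, 0 < deg (Hrel g u) x -> g u x) -> Hrel g u v w ->
  (forall x y, Hrel g u x y -> x = v \/ y = v) -> is_Q N t g.
Proof.
move=> sg du nH gpos Hvw cent.
have Hs := H_simple u sg.
have degHv : deg (Hrel g u) v = t.
  rewrite deg_star // -nH /nedges; apply: eq_card => e; rewrite inE.
  apply/andP/idP => [[]//| He]; split => //.
  move/edge_setP: (He) => [x [y [Hxy ->]]].
  by case: (cent x y Hxy) => ->; rewrite !inE eqxx ?orbT.
have pos : forall x y, Hrel g u x y -> 0 < deg (Hrel g u) x.
  by move=> x y Hxy; apply/card_gt0P; exists y; rewrite inE.
have guv := gpos v (pos v w Hvw).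
have vu : v != u by move: Hvw => /and3P [].
exists u, v; split => //.
  by rewrite (deg_decomp u v sg) degHv guv (negbTE vu) mul0n addn0 addn1.
move=> w' gvw w'u; apply: gpos; apply: (pos w' v).
by rewrite HrelE w'u vu !andbT sg.1.
Qed.

Lemma set2_neq (T : finType) (x y z w : T) :
  x \notin [set z; w] -> ([set x; y] == [set z; w]) = false.
Proof.
move=> xn; apply/negP => /eqP E; move: xn; by rewrite -E !inE eqxx.
Qed.

Lemma tri_Q (T : finType) (g : rel T) u N t a b c :
  simple_graph g -> deg g u = N - t -> nedges (Hrel g u) = t ->
  (forall x, 0 < deg (Hrel g u) x -> g u x) ->
  Hrel g u a b -> Hrel g u b c -> Hrel g u a c ->
  (forall x y, Hrel g u x y -> (x \in [:: a; b; c]) && (y \in [:: a; b; c])) ->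
  t = 3 /\ is_Qstar3 N g.
Proof.
move=> sg du nH gpos Hab Hbc Hac tri.
have Hs := H_simple u sg.
have neq : forall x y, Hrel g u x y -> x != y.
  by move=> x y Hxy; apply/negP => /eqP E; rewrite E Hs.2 in Hxy.
have ab := neq _ _ Hab; have bc := neq _ _ Hbc; have ac := neq _ _ Hac.
have ES : edge_set (Hrel g u) = [set [set a; b]; [set b; c]; [set a; c]].
  apply/setP => e; apply/idP/idP.
    move=> /edge_setP [x [y [Hxy ->]]].
    have xy := neq _ _ Hxy.
    move: (tri x y Hxy) xy => /andP [].
    rewrite !inE => /or3P [] /eqP -> /or3P [] /eqP ->; rewrite ?eqxx //= => _;
      by rewrite ?eqxx ?orbT // setUC ?eqxx ?orbT.
  rewrite !inE => /orP [/orP [] |] /eqP ->; apply/edge_setP;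
    [exists a, b | exists b, c | exists a, c]; by [].
have t3 : t = 3.
  rewrite -nH /nedges ES -setUA cardsU1 cards2 !inE.
  have n1 : ([set a; b] == [set b; c]) = false.
    by apply: set2_neq; rewrite !inE negb_or ab ac.
  have n2 : ([set a; b] == [set a; c]) = false.
    by rewrite setUC; apply: set2_neq; rewrite !inE negb_or eq_sym ab bc.
  have n3 : ([set b; c] == [set a; c]) = false.
    by apply: set2_neq; rewrite !inE negb_or eq_sym ab bc.
  by rewrite n1 n2 n3.
have pos : forall x y, Hrel g u x y -> 0 < deg (Hrel g u) x.
  by move=> x y Hxy; apply/card_gt0P; exists y; rewrite inE.
have sH := Hs.1.
split => //; exists u, a, b, c; split.
- by rewrite du t3.
- split; apply: gpos.
  + exact: pos Hab.
  + exact: pos Hbc.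
  + by apply: (pos _ a); rewrite sH.
- by split.
- by move: Hab Hbc Hac => /and3P [-> _ _] /and3P [-> _ _] /and3P [-> _ _].
move=> x y gxy.
case: (eqVneq x u) => [->|xu]; first by apply: Or31.
case: (eqVneq y u) => [->|yu]; first by apply: Or32.
by apply: Or33; apply: tri; rewrite HrelE gxy xu yu.
Qed.
Unset Implicit Arguments.

Theorem mainTheorem13 (t N : nat) (T : finType) (g : rel T) :
  1 <= t -> 2 * t + 1 <= N ->
  simple_graph g ->
  (forall x : T, 0 < deg g x) ->
  nedges g = N ->
  maxdeg g = N - t ->
  N < 2 * (N - t) ->
  is_f N (N - t) (nLedges g) ->
  nLedges g = 'C(N - t, 2) + 'C(t + 2, 2) - 1 /\
  (is_Q N t g \/ (t = 3 /\ is_Qstar3 N g)).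
Proof.
move=> t1 tN sg dpos eN md Nlt isf.
have lower : 'C(N - t, 2) + 'C(t + 2, 2) - 1 <= nLedges g.
  pose s := N - 2 * t - 1.
  have [adm Lq] := Q_admissible s t1.
  have e1 : t + s + 1 + t = N by rewrite /s; lia.
  have e2 : t + s + 1 = N - t by rewrite /s; lia.
  rewrite e1 e2 in adm Lq.
  by rewrite -Lq; apply: isf.2.
have [x0 _] : exists x : T, True.
  have : 0 < nedges g by rewrite eN; lia.
  move=> /card_gt0P [B /edge_setP [x [y [_ _]]]]; by exists x.
have T0 : 0 < #|T| by apply/card_gt0P; exists x0.
have [u du] := eq_bigmax (deg g) T0.
rewrite -/(maxdeg g) md in du; move: du => /esym du.
set H := Hrel g u.
have Hs : simple_graph H := H_simple u sg.
have sumgu : \sum_x (g u x : nat) = deg g u by rewrite /deg card_setb.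
have nH : nedges H = t.
  have h1 := handshake sg; have h2 := handshake Hs.
  rewrite (eq_bigr _ (fun x _ => deg_decomp u x sg)) !big_split /= sumgu sum_pick in h1.
  rewrite -/H in h1; lia.
have Lg : nLedges g = 'C(N - t, 2) + nLedges H + \sum_x (g u x * deg H x).
  rewrite line_count // (eq_bigr _ (fun x _ => bin_decomp u x sg)) !big_split /=.
  rewrite sum_pick -line_count // du -/H; lia.
have LH := line_le H.
have Asum : \sum_x deg H x = \sum_x (g u x * deg H x) + \sum_x (~~ g u x * deg H x).
  by rewrite -big_split /=; apply: eq_bigr => x _; case: (g u x); rewrite /= ?mul1n ?mul0n ?addn0.
have hH := handshake Hs.
have Cbin : 'C(t + 2, 2) = 'C(t, 2) + 2 * t + 1.
  by rewrite addn2 binS binS !bin1; lia.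
rewrite nH in LH hH.
have eqL : nLedges g = 'C(N - t, 2) + 'C(t + 2, 2) - 1 by lia.
split => //.
have LHe : nLedges H = 'C(nedges H, 2) by rewrite nH; lia.
have inter := line_eq LHe.
have gpos : forall x, 0 < deg H x -> g u x.
  have z : \sum_x (~~ g u x * deg H x) == 0 by apply/eqP; lia.
  move: z; rewrite sum_nat_eq0 => /forallP z x dx.
  move: (z x); case: (g u x) => //=; rewrite mul1n => /eqP d0.
  by rewrite d0 in dx.
have [a [b Hab]] : exists a b, H a b.
  have : 0 < nedges H by rewrite nH.
  by move=> /card_gt0P [B /edge_setP [x [y [Hxy _]]]]; exists x, y.
have symH := Hs.1.
have irrH := Hs.2.
case: (boolP [forall x, forall y, H x y ==> (x == a) || (y == a)]) => [/forallP allA | ].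
  left; apply: (centre_Q sg du nH gpos Hab).
  move=> x y Hxy; move: (allA x) => /forallP /(_ y) /implyP /(_ Hxy) /orP [] /eqP; by [left | right].
move=> /forallPn [x /forallPn [y]]; rewrite negb_imply negb_or => /and3P [Hxy xa ya].
have [c [Hbc ca]] : exists c, H b c /\ c != a.
  move: (inter _ _ _ _ Hxy Hab); rewrite (negbTE xa) (negbTE ya) /= => /orP [] /eqP E.
    by exists y; rewrite -E.
  by exists x; rewrite -E symH.
case: (boolP [forall x, forall y, H x y ==> (x == b) || (y == b)]) => [/forallP allB | ].
  left; apply: (centre_Q sg du nH gpos Hbc).
  move=> x' y' Hxy'; move: (allB x') => /forallP /(_ y') /implyP /(_ Hxy') /orP [] /eqP; by [left | right].
move=> /forallPn [x' /forallPn [y']]; rewrite negb_imply negb_or => /and3P [Hxy' xb yb].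
have [d [Had db]] : exists d, H a d /\ d != b.
  move: (inter _ _ _ _ Hxy' Hab); rewrite (negbTE xb) (negbTE yb) !orbF => /orP [] /eqP E.
    by exists y'; rewrite -E.
  by exists x'; rewrite -E symH.
have ab : a != b by apply/negP => /eqP E; rewrite E irrH in Hab.
have bc : b != c by apply/negP => /eqP E; rewrite E irrH in Hbc.
have ac : a != c by rewrite eq_sym.
have Hac : H a c.
  move: (inter _ _ _ _ Had Hbc); rewrite (negbTE ab) (negbTE ac) (negbTE db) /=.
  by move=> /eqP <-.
right; apply: (tri_Q sg du nH gpos Hab Hbc Hac).
have ba : (b == a) = false by rewrite eq_sym (negbTE ab).
have cb : (c == b) = false by rewrite eq_sym (negbTE bc).
have ca' : (c == a) = false by apply/negbTE.
have ab' := negbTE ab; have bc' := negbTE bc; have ac' := negbTE ac.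
have mem1 : forall p q, H p q -> p \in [:: a; b; c].
  move=> p q Hpq; rewrite !inE; apply/negPn/negP => /norP [pa /norP [pb pc]].
  have i1 := inter _ _ _ _ Hpq Hab; have i2 := inter _ _ _ _ Hpq Hbc.
  have i3 := inter _ _ _ _ Hpq Hac.
  rewrite (negbTE pa) (negbTE pb) (negbTE pc) /= in i1 i2 i3.
  case/orP: i1 => /eqP Eq; rewrite Eq in i2 i3.
    by rewrite ab' ac' in i2.
  by rewrite ba bc' in i3.
by move=> p q Hpq; rewrite (mem1 _ _ Hpq) (mem1 q p) // symH.
Qed.
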